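(* Let $G$ be a network (as in the context) that contains a directed circuit, and consider (BBMG) on $G$ with $a_i>0$, $b_i\in\mathbb{R}\setminus\{0\}$, $d_i\in\mathbb{R}$. Then there is no non-constant travelling wave solution $u$ of (BBMG) with all speeds $c_i>0$ whose profiles $\varphi_i$ are all solitary.
   Context: A network $G$ is obtained from a non-empty, simple, connected, at most countable, locally finite graph by realizing each edge $\mathsf{e}_j$ ($j\in\mathbf{E}\subset\mathbb{N}$) as the image of a $\mathcal{C}^2$ Jordan curve $\pi_j:[0,\ell_j]\to\mathbb{R}^m$ with arc-length parameter $x_j$; distinct edges meet in at most one common vertex. $N(\mathsf{v})$ is the set of indices of edges at $\mathsf{v}$; $V_r$ the set of vertices of degree $\ge2$; $\iota_{ij}=1$ if $\pi_j(\ell_j)=\mathsf{v}_i$, $-1$ if $\pi_j(0)=\mathsf{v}_i$, $0$ otherwise. A directed circuit is a sequence of $n\ge2$ edges $\mathsf{e}_{1},\dots,\mathsf{e}_{n}$ with $\pi_{i}(\ell_{i})=\pi_{i+1}(0)$ for $1\le i<n$ and $\pi_n(\ell_n)=\pi_1(0)$. (BBMG): $\partial_t u_i - a_i\partial_i^2\partial_t u_i + b_i u_i\partial_i u_i + d_i\partial_i u_i=0$ on each $\mathsf{e}_i$, $t>0$; for each $\mathsf{v}_p\in V_r$, $t\ge0$: $u_j(t,\mathsf{v}_p)=u_k(t,\mathsf{v}_p)$ for $j,k\in N(\mathsf{v}_p)$ and $\sum_j\iota_{pj}a_j\partial_ju_j(t,\mathsf{v}_p)=0$ (values at $\mathsf{v}_p$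 meaning at $x_j=\pi_j^{-1}(\mathsf{v}_p)$, $\partial_j=\partial/\partial x_j$). A strong solution is continuous on $G$ with $u_i\in\mathcal{C}^{1,1}(\mathsf{e}_i\times[0,\infty))$, $\partial_tu_i\in\mathcal{C}^{2,0}(\mathsf{e}_i\times[0,\infty))$, satisfying (BBMG) pointwise. A travelling wave is a strong solution with speeds $c_i\ge0$ and $\varphi_i\in\mathcal{C}^3(\mathbb{R})$ such that $u_i(x_i,t)=\varphi_i(x_i-c_it)$ for $x_i\in\mathsf{e}_i$, $t\ge0$. A function $\varphi:\mathbb{R}\to\mathbb{R}$ is solitary if it has at most one local extremum and $\lim_{z\to\pm\infty}\varphi(z)$ exist in $\mathbb{R}$. *)

(* Defs.v *)
From Stdlib Require Import Reals List Relations ClassicalEpsilon.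
From Coquelicot Require Import Coquelicot.
Open Scope R_scope.

(* Edges: indices j : nat with E j.
   Edge j is an arc of length ell j from src j = pi_j(0) to tgt j = pi_j(ell_j),
   parametrised by arc length x_j in [0, ell j]. *)

Definition incident {V : Type} (src tgt : nat -> V) (j : nat) (v : V) : Prop :=
  src j = v \/ tgt j = v.

Definition adjacent {V : Type} (E : nat -> Prop) (src tgt : nat -> V) (v w : V) : Prop :=
  exists j, E j /\ ((src j = v /\ tgt j = w) \/ (src j = w /\ tgt j = v)).

(* non-empty, simple, connected, at most countable, locally finite graph,
   realised with edges of positive length whose endpoints are distinct *)
Definition is_network {V : Type} (E : nat -> Prop) (src tgt : nat -> V)
    (ell : nat -> R) : Prop :=
  inhabited V /\
  (exists f : V -> nat, forall v w, f v = f w -> v = w) /\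
  (forall j, E j -> 0 < ell j) /\
  (forall j, E j -> src j <> tgt j) /\
  (forall j k, E j -> E k -> j <> k ->
     ~ ((src j = src k /\ tgt j = tgt k) \/ (src j = tgt k /\ tgt j = src k))) /\
  (forall v w, clos_refl_trans V (adjacent E src tgt) v w) /\
  (forall v, exists l : list nat, forall j, E j -> incident src tgt j v -> In j l).

Definition has_directed_circuit {V : Type} (E : nat -> Prop) (src tgt : nat -> V) : Prop :=
  exists l : list nat,
    (2 <= length l)%nat /\ (forall j, In j l -> E j) /\
    (forall i, (S i < length l)%nat -> tgt (nth i l 0%nat) = src (nth (S i) l 0%nat)) /\
    tgt (last l 0%nat) = src (hd 0%nat l).

Definition in_Vr {V : Type} (E : nat -> Prop) (src tgt : nat -> V) (v : V) : Prop :=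
  exists j k, j <> k /\ E j /\ E k /\ incident src tgt j v /\ incident src tgt k v.

Definition iota {V : Type} (src tgt : nat -> V) (v : V) (j : nat) : R :=
  if excluded_middle_informative (tgt j = v) then 1
  else if excluded_middle_informative (src j = v) then -1 else 0.

(* pi_j^{-1}(v) : the arc-length coordinate of vertex v on edge j *)
Definition pos {V : Type} (src tgt : nat -> V) (ell : nat -> R) (j : nat) (v : V) : R :=
  if excluded_middle_informative (tgt j = v) then ell j else 0.

Definition C3 (f : R -> R) : Prop :=
  (forall x, ex_derive_n f 1 x) /\ (forall x, ex_derive_n f 2 x) /\
  (forall x, ex_derive_n f 3 x) /\ (forall x, continuous (Derive_n f 3) x).

Definition local_extremum (f : R -> R) (z : R) : Prop :=
  (exists delta, 0 < delta /\ forall y, Rabs (y - z) < delta -> f y <= f z) \/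
  (exists delta, 0 < delta /\ forall y, Rabs (y - z) < delta -> f z <= f y).

Definition solitary (f : R -> R) : Prop :=
  (forall z1 z2, local_extremum f z1 -> local_extremum f z2 -> z1 = z2) /\
  (exists l, is_lim f p_infty (Finite l)) /\
  (exists l, is_lim f m_infty (Finite l)).

(* u : nat -> R -> R -> R, u j x t = u_j(x_j, t) *)
Definition dt (u : R -> R -> R) (x t : R) : R := Derive (fun s => u x s) t.
Definition dx (u : R -> R -> R) (x t : R) : R := Derive (fun y => u y t) x.
Definition dxxt (u : R -> R -> R) (x t : R) : R :=
  Derive (fun y => Derive (fun y' => dt u y' t) y) x.

Definition sumR (l : list nat) (f : nat -> R) : R := fold_right Rplus 0 (map f l).

Definition solves_BBMG {V : Type} (E : nat -> Prop) (src tgt : nat -> V)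
    (ell a b d : nat -> R) (u : nat -> R -> R -> R) : Prop :=
  (forall i, E i -> forall x t, 0 <= x <= ell i -> 0 < t ->
     dt (u i) x t - a i * dxxt (u i) x t + b i * u i x t * dx (u i) x t
     + d i * dx (u i) x t = 0) /\
  (forall v, in_Vr E src tgt v -> forall t, 0 <= t ->
     forall j k, E j -> E k -> incident src tgt j v -> incident src tgt k v ->
       u j (pos src tgt ell j v) t = u k (pos src tgt ell k v) t) /\
  (forall v, in_Vr E src tgt v -> forall t, 0 <= t ->
     forall l : list nat, NoDup l ->
       (forall j, In j l <-> (E j /\ incident src tgt j v)) ->
       sumR l (fun j => iota src tgt v j * a j * dx (u j) (pos src tgt ell j v) t) = 0).

Definition wave (c : nat -> R) (phi : nat -> R -> R) : nat -> R -> R -> R :=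
  fun i x t => phi i (x - c i * t).

Definition travelling_wave {V : Type} (E : nat -> Prop) (src tgt : nat -> V)
    (ell a b d : nat -> R) (c : nat -> R) (phi : nat -> R -> R) : Prop :=
  (forall i, E i -> 0 <= c i) /\
  (forall i, E i -> C3 (phi i)) /\
  solves_BBMG E src tgt ell a b d (wave c phi).

Definition nonconstant_on (E : nat -> Prop) (ell : nat -> R)
    (u : nat -> R -> R -> R) : Prop :=
  exists i j x y t s, E i /\ E j /\ 0 <= x <= ell i /\ 0 <= y <= ell j /\
    0 <= t /\ 0 <= s /\ u i x t <> u j y s.

(* Main.v *)
Require Import Defs.
From Stdlib Require Import Reals List Lra Lia ClassicalEpsilon.
From Coquelicot Require Import Coquelicot.
Open Scope R_scope.

Lemma step_lem (V : Type) (E : nat -> Prop) (src tgt : nat -> V)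
  (ell a b d c : nat -> R) (phi : nat -> R -> R) j k :
  is_network E src tgt ell ->
  solves_BBMG E src tgt ell a b d (wave c phi) ->
  E j -> E k -> tgt j = src k -> forall t, 0 <= t ->
  phi k (- c k * t) = phi j (ell j - c j * t).
Proof.
  intros Hn [_ [Hcont _]] Ej Ek Hjk t Ht.
  destruct Hn as [_ [_ [_ [Hsd _]]]].
  assert (Hjk' : j <> k).
  { intro H; subst k. apply (Hsd j Ej). congruence. }
  assert (Hv : in_Vr E src tgt (tgt j)).
  { exists j, k. repeat split; auto; unfold incident; auto. }
  assert (Hi1 : incident src tgt j (tgt j)) by (unfold incident; auto).
  assert (Hi2 : incident src tgt k (tgt j)) by (unfold incident; auto).
  pose proof (Hcont (tgt j) Hv t Ht j k Ej Ek Hi1 Hi2) as H.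
  unfold wave, Defs.pos in H.
  destruct (excluded_middle_informative (tgt j = tgt j)) as [_|C]; [|easy].
  destruct (excluded_middle_informative (tgt k = tgt j)) as [C|_].
  { exfalso. apply (Hsd k Ek). congruence. }
  rewrite H. f_equal. lra.
Qed.

Lemma last_nth_lem (l : list nat) d : last l d = nth (pred (length l)) l d.
Proof.
  induction l as [|x l IH]; simpl; auto.
  destruct l as [|y l']; [reflexivity|].
  rewrite IH. simpl. reflexivity.

Qed.

Fixpoint Tsum (tau : nat -> R) (k : nat) : R :=
  match k with O => 0 | S k' => Tsum tau k' + tau k' end.

Theorem lemma7p1 (V : Type) (E : nat -> Prop) (src tgt : nat -> V)
  (ell a b d : nat -> R) :
  is_network E src tgt ell ->
  has_directed_circuit E src tgt ->
  (forall i, E i -> 0 < a i) ->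
  (forall i, E i -> b i <> 0) ->
  ~ (exists (c : nat -> R) (phi : nat -> R -> R),
       travelling_wave E src tgt ell a b d c phi /\
       (forall i, E i -> 0 < c i) /\
       (forall i, E i -> solitary (phi i)) /\
       nonconstant_on E ell (wave c phi)).
Proof.
  intros Hnet [l [Hlen [HinE [Hchain Hwrap]]]] _ _
    [c [phi [[_ [_ Hsol]] [Hcpos [Hsolit _]]]]].
  set (e := fun k => nth k l 0%nat).
  set (n := length l) in *.
  assert (HE : forall k, (k < n)%nat -> E (e k)).
  { intros k Hk. apply HinE. apply nth_In. exact Hk. }
  assert (Hellp : forall k, (k < n)%nat -> 0 < ell (e k)).
  { destruct Hnet as [_ [_ [H _]]]. intros k Hk. apply H, HE, Hk. }
  set (tau := fun k => ell (e k) / c (e k)).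
  assert (Htau : forall k, (k < n)%nat -> 0 < tau k).
  { intros k Hk. unfold tau. apply Rdiv_lt_0_compat; auto. }
  assert (HT0 : forall k, (k <= n)%nat -> 0 <= Tsum tau k).
  { induction k; intros Hk; simpl; [lra|].
    pose proof (IHk ltac:(lia)). pose proof (Htau k ltac:(lia)). lra. }
  set (c0 := c (e 0%nat)).
  assert (Hc0 : 0 < c0) by (apply Hcpos, HE; lia).
  assert (Hchainf : forall k, (k < n)%nat -> forall t, Tsum tau k <= t ->
     phi (e k) (- c (e k) * t) = phi (e 0%nat) (- c0 * (t - Tsum tau k))).
  { induction k; intros Hk t Ht.
    - simpl. unfold c0. f_equal. lra.
    - simpl in Ht.
      pose proof (HT0 k ltac:(lia)).
      pose proof (Htau k ltac:(lia)).
      rewrite (step_lem V E src tgt ell a b d c phi (e k) (e (S k)) Hnet Hsol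
                 (HE k ltac:(lia)) (HE (S k) Hk) (Hchain k Hk) t ltac:(lra)).
      assert (Hck : 0 < c (e k)) by (apply Hcpos, HE; lia).
      replace (ell (e k) - c (e k) * t) with (- c (e k) * (t - tau k))
        by (unfold tau; field; lra).
      rewrite (IHk ltac:(lia) (t - tau k) ltac:(lra)). simpl.
      f_equal. lra. }
  destruct n as [|m] eqn:Hnm; [lia|].
  set (P := Tsum tau (S m)).
  assert (HP : 0 < P).
  { unfold P; simpl. pose proof (HT0 m ltac:(lia)). pose proof (Htau m ltac:(lia)). lra. }
  set (g := fun t => phi (e 0%nat) (- c0 * t)).
  assert (Hper : forall t, P <= t -> g t = g (t - P)).
  { intros t Ht. unfold g.
    assert (Hlast : last l 0%nat = e m).
    { rewrite last_nth_lem. unfold e. fold n. rewrite Hnm. reflexivity. }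
    assert (Hhd : hd 0%nat l = e 0%nat).
    { unfold e. destruct l; reflexivity. }
    rewrite Hlast, Hhd in Hwrap.
    pose proof (HT0 m ltac:(lia)). pose proof (Htau m ltac:(lia)).
    unfold P in *; simpl in *.
    unfold c0 in *.
    rewrite (step_lem V E src tgt ell a b d c phi (e m) (e 0%nat) Hnet Hsol
               (HE m ltac:(lia)) (HE 0%nat ltac:(lia)) Hwrap t ltac:(lra)).
    assert (Hck : 0 < c (e m)) by (apply Hcpos, HE; lia).
    replace (ell (e m) - c (e m) * t) with (- c (e m) * (t - tau m))
      by (unfold tau; field; lra).
    rewrite (Hchainf m ltac:(lia) (t - tau m) ltac:(lra)).
    f_equal. lra. }
  assert (Hperk : forall k s, 0 <= s -> g (s + INR k * P) = g s).
  { induction k; intros s Hs.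
    - simpl. f_equal. lra.
    - rewrite S_INR. rewrite Hper by (pose proof (pos_INR k); nra).
      replace (s + (INR k + 1) * P - P) with (s + INR k * P) by ring.
      auto. }
  assert (HE0 : E (e 0%nat)) by (apply HE; lia).
  destruct (Hsolit _ HE0) as [Huniq [_ [L HL]]].
  apply is_lim_spec in HL. simpl in HL.
  assert (Hconst : forall s, 0 <= s -> g s = L).
  { intros s Hs. destruct (Req_dec (g s) L) as [Heq|Hne]; auto.
    exfalso.
    assert (Heps : 0 < Rabs (g s - L)) by (apply Rabs_pos_lt; lra).
    destruct (HL (mkposreal _ Heps)) as [M HM]. simpl in HM.
    destruct (INR_archimed (c0 * P) (- M - c0 * s)) as [k Hk]; [nra|].
    specialize (HM (- c0 * (s + INR k * P))).
    assert (Hlt : - c0 * (s + INR k * P) < M).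
    { replace (- c0 * (s + INR k * P)) with (- c0 * s - INR k * (c0 * P)) by ring. lra. }
    specialize (HM Hlt).
    fold (g (s + INR k * P)) in HM. rewrite Hperk in HM by lra. lra. }
  assert (Hz : forall z, z <= 0 -> phi (e 0%nat) z = L).
  { intros z Hz. pose proof (Hconst (- z / c0)) as H.
    unfold g in H. replace (- c0 * (- z / c0)) with z in H by (field; lra).
    apply H. apply Rmult_le_pos; [lra|]. left. apply Rinv_0_lt_compat; lra. }
  assert (Hext : forall z, z <= -1 -> local_extremum (phi (e 0%nat)) z).
  { intros z Hz0. left. exists (1/2). split; [lra|].
    intros y Hy. apply Rabs_def2 in Hy.
    rewrite (Hz y) by lra. rewrite (Hz z) by lra. lra. }
  pose proof (Huniq (-1) (-2) (Hext (-1) ltac:(lra)) (Hext (-2) ltac:(lra))).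
  lra.
Qed.
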